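(* Let $a,b,c\in\mathbb{R}$ with $c\neq 0$, and let $c_{1,2}=-\frac{2}{27}a^3+\frac13 ab\pm\frac{2}{27}\sqrt{(a^2-3b)^3}$ (defined when $b\le a^2/3$; upper sign for $c_1$). The cubic $x^3+ax^2+bx+c$ has three negative real roots (counted with multiplicity) if and only if $a>0$ and either (i) $0<b\le a^2/4$ and $0<c\le c_1$, or (ii) $a^2/4<b\le a^2/3$ and $0<c_2\le c\le c_1$. *)

(* Defs.v *)
From HB Require Import structures.
From mathcomp Require Import all_boot all_order all_algebra.
Set Implicit Arguments. Unset Strict Implicit. Unset Printing Implicit Defensive.
Import Order.TTheory GRing.Theory Num.Theory.
Local Open Scope ring_scope.

Definition c1 (R : rcfType) (a b : R) : R :=
  - (2 / 27) * a ^+ 3 + (1 / 3) * a * b + (2 / 27) * Num.sqrt ((a ^+ 2 - 3 * b) ^+ 3).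

Definition c2 (R : rcfType) (a b : R) : R :=
  - (2 / 27) * a ^+ 3 + (1 / 3) * a * b - (2 / 27) * Num.sqrt ((a ^+ 2 - 3 * b) ^+ 3).

Definition cubic (R : rcfType) (a b c : R) : {poly R} :=
  'X^3 + a *: 'X^2 + b *: 'X + c%:P.

Definition three_neg_roots (R : rcfType) (a b c : R) : Prop :=
  exists r1 r2 r3 : R, [/\ r1 < 0, r2 < 0, r3 < 0 &
    cubic a b c = ('X - r1%:P) * ('X - r2%:P) * ('X - r3%:P)].

(* Main.v *)
Require Import Defs.
From HB Require Import structures.
From mathcomp Require Import all_boot all_order all_algebra.
From mathcomp Require Import ring lra.
Import Order.TTheory GRing.Theory Num.Theory.
Local Open Scope ring_scope.

Set Implicit Arguments.
Section Aux.
Variable R : rcfType.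
Implicit Types a b c x : R.

Lemma horner_cubic a b c x : (cubic a b c).[x] = x ^+ 3 + a * x ^+ 2 + b * x + c.
Proof. by rewrite /cubic !hornerE. Qed.

Definition delta a b c : R :=
  18 * a * b * c - 4 * a ^+ 3 * c + a ^+ 2 * b ^+ 2 - 4 * b ^+ 3 - 27 * c ^+ 2.

Lemma delta_c12 a b c : 0 <= a ^+ 2 - 3 * b ->
  delta a b c = - 27 * ((c - c1 a b) * (c - c2 a b)).
Proof.
move=> h.
set s := Num.sqrt ((a ^+ 2 - 3 * b) ^+ 3).
have hs : s ^+ 2 = (a ^+ 2 - 3 * b) ^+ 3 by rewrite sqr_sqrtr //; apply: exprn_ge0.
have -> : - 27 * ((c - c1 a b) * (c - c2 a b)) =
   delta a b c + 4 / 27 * (s ^+ 2 - (a ^+ 2 - 3 * b) ^+ 3).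
  by rewrite /c1 /c2 /delta -/s; field.
by rewrite hs subrr mulr0 addr0.
Qed.

Lemma neg_root a b c x : 0 < a -> 0 < b -> 0 < c ->
  x ^+ 3 + a * x ^+ 2 + b * x + c = 0 -> x < 0.
Proof.
move=> ha hb hc hx; rewrite ltNge; apply/negP => x0.
have h1 : 0 <= x ^+ 3 by exact: exprn_ge0.
have h2 : 0 <= a * x ^+ 2 by apply: mulr_ge0; [exact: ltW | exact: sqr_ge0].
have h3 : 0 <= b * x by apply: mulr_ge0 => //; exact: ltW.
lra.
Qed.

Lemma c2_sign a b : 0 < a -> 0 <= a ^+ 2 - 3 * b ->
  (a ^+ 2 / 4 < b -> 0 < c2 a b) /\ (b <= a ^+ 2 / 4 -> c2 a b <= 0).
Proof.
move=> ha h.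
set s := Num.sqrt ((a ^+ 2 - 3 * b) ^+ 3).
have hs : s ^+ 2 = (a ^+ 2 - 3 * b) ^+ 3 by rewrite sqr_sqrtr //; exact: exprn_ge0.
have s0 : 0 <= s by exact: sqrtr_ge0.
set X := 9 * a * b - 2 * a ^+ 3.
have -> : c2 a b = (X - 2 * s) / 27 by rewrite /c2 -/s /X; field.
have key : X ^+ 2 - 4 * s ^+ 2 = 27 * b ^+ 2 * (4 * b - a ^+ 2).
  by rewrite hs /X; ring.
split=> hb.
- have bpos : 0 < b by have := sqr_ge0 a; lra.
  have Xpos : 0 < X.
    have -> : X = a * (9 * b - 2 * a ^+ 2) by rewrite /X; ring.
    by apply: mulr_gt0 => //; lra.
  have k2 : 0 < X ^+ 2 - 4 * s ^+ 2.
    rewrite key; apply: mulr_gt0; last by lra.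
    by apply: mulr_gt0 => //; exact: exprn_gt0.
  have : 0 < X - 2 * s by nra.
  move=> H; apply: divr_gt0 => //; lra.
- have k2 : X ^+ 2 - 4 * s ^+ 2 <= 0.
    rewrite key; apply: mulr_ge0_le0; last by lra.
    by apply: mulr_ge0 => //; exact: sqr_ge0.
  have : X - 2 * s <= 0 by nra.
  move=> H; apply: mulr_le0_ge0 => //; rewrite invr_ge0; lra.
Qed.

End Aux.
Arguments delta {R}.
Arguments delta_c12 {R}.
Arguments neg_root {R}.
Arguments c2_sign {R}.
Arguments horner_cubic {R}.

Theorem mainTheorem6 (R : rcfType) (a b c : R) (hc : c != 0) :
  three_neg_roots a b c <->
  0 < a /\
  ((0 < b /\ b <= a ^+ 2 / 4 /\ 0 < c /\ c <= c1 a b) \/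
   (a ^+ 2 / 4 < b /\ b <= a ^+ 2 / 3 /\ 0 < c2 a b /\ c2 a b <= c /\ c <= c1 a b)).
Proof.
have c12 : c2 a b <= c1 a b.
  rewrite /c1 /c2; have := sqrtr_ge0 ((a ^+ 2 - 3 * b) ^+ 3); lra.
split.
- case=> r1 [r2 [r3 [h1 h2 h3 E]]].
  have ev x : x ^+ 3 + a * x ^+ 2 + b * x + c = (x - r1) * (x - r2) * (x - r3).
    by rewrite -horner_cubic E !hornerM !hornerXsubC.
  have e0 := ev 0; have e1 := ev 1; have em := ev (-1).
  have ec : c = - (r1 * r2 * r3) by lra.
  have ea : a = - (r1 + r2 + r3).
    have : 2 * a + 2 * c = - 2 * (r1 + r2 + r3) - 2 * (r1 * r2 * r3).
      by lra.
    rewrite ec; lra.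
  have eb : b = r1 * r2 + r1 * r3 + r2 * r3.
    have : 2 * b = 2 * (r1 * r2 + r1 * r3 + r2 * r3).
      by lra.
    lra.
  have p12 : 0 < r1 * r2 by rewrite nmulr_rgt0.
  have p13 : 0 < r1 * r3 by rewrite nmulr_rgt0.
  have p23 : 0 < r2 * r3 by rewrite nmulr_rgt0.
  have ha : 0 < a by lra.
  have hb : 0 < b by lra.
  have hc0 : 0 < c by rewrite ec oppr_gt0 pmulr_rlt0.
  have h3b : 0 <= a ^+ 2 - 3 * b.
    have -> : a ^+ 2 - 3 * b = ((r1 - r2) ^+ 2 + (r1 - r3) ^+ 2 + (r2 - r3) ^+ 2) / 2.
      by rewrite ea eb; field.
    apply: divr_ge0; last by lra.
    by rewrite !addr_ge0 // sqr_ge0.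
  have hd : 0 <= delta a b c.
    have -> : delta a b c = ((r1 - r2) * (r1 - r3) * (r2 - r3)) ^+ 2.
      by rewrite /delta ea eb ec; ring.
    exact: sqr_ge0.
  move: hd; rewrite delta_c12 // => hd.
  have hprod : (c - c1 a b) * (c - c2 a b) <= 0 by lra.
  have hcc : c2 a b <= c /\ c <= c1 a b by nra.
  split=> //.
  have [hb4|hb4] := lerP b (a ^+ 2 / 4).
  + by left; lra.
  + right; have := (c2_sign a b ha h3b).1 hb4; lra.
- case=> ha H.
  have [hb hc0 h3b hlo hhi] : [/\ 0 < b, 0 < c, 0 <= a ^+ 2 - 3 * b,
      c2 a b <= c & c <= c1 a b].
    have := sqr_ge0 a => a2.
    case: H => [[hb1 [hb2 [hc1 hc2]]]|[hb1 [hb2 [hc1 [hc2 hc3]]]]].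
    + have h3 : 0 <= a ^+ 2 - 3 * b by lra.
      by split => //; have := (c2_sign a b ha h3).2 hb2; lra.
    + split; lra.
  have hd : 0 <= delta a b c by rewrite delta_c12 //; nra.
  pose M := 1 + a + b + c.
  have hM : (cubic a b c).[-M] <= 0 <= (cubic a b c).[0].
    rewrite !horner_cubic; apply/andP; split; last first.
      have -> : (0:R) ^+ 3 + a * 0 ^+ 2 + b * 0 + c = c by ring.
      exact: ltW.
    have -> : (- M) ^+ 3 + a * (- M) ^+ 2 + b * - M + c =
       - (M ^+ 2) * (1 + b + c) - b * M + c by rewrite /M; ring.
    have M1 : 1 <= M by rewrite /M; lra.
    have M2 : 1 <= M ^+ 2 by nra.
    nra.
  have M0 : - M <= 0 by rewrite /M; lra.
  have [r _ rr] := poly_ivt M0 hM.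
  move: rr; rewrite /root horner_cubic => /eqP rr.
  have rneg := neg_root a b c r ha hb hc0 rr.
  pose p := a + r; have hp : p = a + r by [].
  pose q := b + r * p; have hq : q = b + r * p by [].
  have ecq : c = - r * q by rewrite hq hp; lra.
  pose D := p ^+ 2 - 4 * q; have hD' : D = p ^+ 2 - 4 * q by [].
  have hD : 0 <= D.
    have E2 : delta a b c = D * (r ^+ 2 + p * r + q) ^+ 2.
      by rewrite ecq hD' hq hp /delta; ring.
    case: (eqVneq (r ^+ 2 + p * r + q) 0) => hQ.
    + have -> : D = (p + 2 * r) ^+ 2 by rewrite hD'; lra.
      exact: sqr_ge0.
    + have Q2 : 0 < (r ^+ 2 + p * r + q) ^+ 2 by rewrite exprn_even_gt0 // hQ orbT.
      by rewrite -(pmulr_lge0 _ Q2) -E2.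
  pose sq := Num.sqrt D.
  have hsq : sq ^+ 2 = D by rewrite sqr_sqrtr.
  pose s1 := (- p + sq) / 2; pose s2 := (- p - sq) / 2.
  have es : s1 + s2 = - p by rewrite /s1 /s2; field.
  have ep : s1 * s2 = q.
    have -> : s1 * s2 = (p ^+ 2 - sq ^+ 2) / 4 by rewrite /s1 /s2; field.
    by rewrite hsq hD'; field.
  clearbody s1 s2 sq D q p.
  have Ea : a = - (r + s1 + s2) by lra.
  have Eb : b = r * s1 + r * s2 + s1 * s2.
    have -> : b = q - r * p by lra.
    by rewrite -ep (_ : p = - (s1 + s2)); [ring | lra].
  have Ec : c = - (r * s1 * s2) by rewrite ecq -ep; ring.
  have Efact : cubic a b c = ('X - r%:P) * ('X - s1%:P) * ('X - s2%:P).
    rewrite /cubic Ea Eb Ec -!mul_polyC !(polyCN, polyCD, polyCM); ring.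
  have ev x : x ^+ 3 + a * x ^+ 2 + b * x + c = (x - r) * (x - s1) * (x - s2).
    by rewrite -horner_cubic Efact !hornerM !hornerXsubC.
  exists r, s1, s2; split => //.
  + apply: (neg_root a b c) => //; rewrite ev; ring.
  + apply: (neg_root a b c) => //; rewrite ev; ring.
Qed.
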